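(* Let $f:\mathbb{R}^2\to\mathbb{R}^2$ be a homeomorphism and let $x\in\mathbb{R}^2$ satisfy $\omega(x)=\emptyset$. Then there exists a continuous positive map $\epsilon:\mathbb{R}^2\to\mathbb{R}$ such that for every $y\neq x$ there exists $n>0$ with $\|f^n(x)-f^n(y)\|>\epsilon(f^n(x))$. In particular, if $(x_n)_{n\in\mathbb{Z}}$ is a pseudo-orbit with $x_n=f^n(x)$ for all $n\geq n_0$ (some $n_0$), then the only orbit that can $\epsilon$-shadow $(x_n)_{n\in\mathbb{Z}}$ is the orbit of $x$.
   Context: $\omega(x)$ is the $\omega$-limit set of $x$ under $f$. For a continuous positive $\delta$, a $\delta$-pseudo-orbit is a sequence $(x_n)_{n\in\mathbb{Z}}$ with $\|f(x_n)-x_{n+1}\|<\delta(f(x_n))$ for all $n$; it is $\epsilon$-shadowed by the orbit of a point $w$ if $\|x_n-f^n(w)\|<\epsilon(x_n)$ for all $n\in\mathbb{Z}$. *)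

(* Defs.v *)
From Stdlib Require Import Reals ZArith.
Open Scope R_scope.

Definition R2 : Type := (R * R)%type.

Definition norm2 (p : R2) : R := sqrt (fst p ^ 2 + snd p ^ 2).
Definition sub2 (p q : R2) : R2 := (fst p - fst q, snd p - snd q).

Definition cont2 (f : R2 -> R2) : Prop :=
  forall p e, 0 < e -> exists d, 0 < d /\
    forall q, norm2 (sub2 q p) < d -> norm2 (sub2 (f q) (f p)) < e.

Definition cont2R (h : R2 -> R) : Prop :=
  forall p e, 0 < e -> exists d, 0 < d /\
    forall q, norm2 (sub2 q p) < d -> Rabs (h q - h p) < e.

Definition cont_pos (h : R2 -> R) : Prop := cont2R h /\ forall p, 0 < h p.

Definition homeomorphism (f : R2 -> R2) : Prop :=
  cont2 f /\ exists g : R2 -> R2, cont2 g /\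
    (forall p, g (f p) = p) /\ (forall p, f (g p) = p).

Definition iterf (f : R2 -> R2) (n : nat) (x : R2) : R2 := Nat.iter n f x.

Definition omega_limit (f : R2 -> R2) (x : R2) : R2 -> Prop :=
  fun z => forall e, 0 < e -> forall N : nat, exists n : nat,
    (N <= n)%nat /\ norm2 (sub2 (iterf f n x) z) < e.

(* the bi-infinite orbit of w: o n = f^n(w) for all n in Z
   (for a bijection f this determines o uniquely) *)
Definition is_orbit (f : R2 -> R2) (w : R2) (o : Z -> R2) : Prop :=
  o 0%Z = w /\ forall n : Z, o (n + 1)%Z = f (o n).

Definition pseudo_orbit (f : R2 -> R2) (delta : R2 -> R) (xs : Z -> R2) : Prop :=
  forall n : Z, norm2 (sub2 (f (xs n)) (xs (n + 1)%Z)) < delta (f (xs n)).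

Definition shadowed (f : R2 -> R2) (eps : R2 -> R) (xs : Z -> R2) (w : R2) : Prop :=
  exists o, is_orbit f w o /\
    forall n : Z, norm2 (sub2 (xs n) (o n)) < eps (xs n).

(* Main.v *)
Require Import Defs.
From Stdlib Require Import Reals ZArith Lra Lia Psatz Rgeom Classical IndefiniteDescription.
From Coquelicot Require Import Coquelicot.
Open Scope R_scope.

Lemma n2_ge0 p : 0 <= norm2 p.
Proof. unfold norm2; apply sqrt_pos. Qed.

Lemma n2_sym p q : norm2 (sub2 p q) = norm2 (sub2 q p).
Proof. unfold norm2, sub2; simpl; f_equal; ring. Qed.

Lemma n2_self p : norm2 (sub2 p p) = 0.
Proof. unfold norm2, sub2; cbn [fst snd]. replace ((fst p - fst p) ^ 2 + (snd p - snd p) ^ 2) with 0 by ring. apply sqrt_0. Qed.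

Lemma n2_tri p q r : norm2 (sub2 p r) <= norm2 (sub2 p q) + norm2 (sub2 q r).
Proof.
  assert (E : forall a b, norm2 (sub2 a b) = dist_euc (fst a) (snd a) (fst b) (snd b)).
  { intros a b; unfold norm2, sub2, dist_euc, Rsqr; simpl; f_equal; ring. }
  rewrite !E; apply triangle.
Qed.

Lemma n2_fst p : Rabs (fst p) <= norm2 p.
Proof. unfold norm2; rewrite <- sqrt_Rsqr_abs; apply sqrt_le_1_alt; unfold Rsqr; nra. Qed.
Lemma n2_snd p : Rabs (snd p) <= norm2 p.
Proof. unfold norm2; rewrite <- sqrt_Rsqr_abs; apply sqrt_le_1_alt; unfold Rsqr; nra. Qed.

Lemma n2_le_sum p : norm2 p <= Rabs (fst p) + Rabs (snd p).
Proof.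
  unfold norm2. rewrite <- (sqrt_Rsqr (Rabs (fst p) + Rabs (snd p))).
  2: { pose proof (Rabs_pos (fst p)); pose proof (Rabs_pos (snd p)); lra. }
  apply sqrt_le_1_alt. rewrite <- (pow2_abs (fst p)), <- (pow2_abs (snd p)).
  pose proof (Rabs_pos (fst p)); pose proof (Rabs_pos (snd p)); unfold Rsqr; nra.
Qed.

Lemma n2_zero p q : norm2 (sub2 p q) = 0 -> p = q.
Proof.
  intro H. unfold norm2, sub2 in H; cbn [fst snd] in H.
  destruct p as [a b], q as [c d]; cbn [fst snd] in *.
  assert (H0 : 0 <= (a - c) ^ 2 + (b - d) ^ 2).
  { pose proof (pow2_ge_0 (a - c)); pose proof (pow2_ge_0 (b - d)); lra. }
  apply (sqrt_eq_0 _ H0) in H.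
  pose proof (pow2_ge_0 (a - c)); pose proof (pow2_ge_0 (b - d)).
  assert (E1 : (a - c) ^ 2 = 0) by lra. assert (E2 : (b - d) ^ 2 = 0) by lra.
  destruct (Req_dec (a - c) 0) as [Z1|Z1]; [|exfalso; exact (pow_nonzero _ 2 Z1 E1)].
  destruct (Req_dec (b - d) 0) as [Z2|Z2]; [|exfalso; exact (pow_nonzero _ 2 Z2 E2)].
  f_equal; lra.
Qed.

Lemma nonomega_spec f x z : ~ omega_limit f x z ->
  exists e, 0 < e /\ exists N : nat, forall n, (N <= n)%nat -> e <= norm2 (sub2 (iterf f n x) z).
Proof.
  intro H. apply NNPP; intro H1. apply H. intros e He N.
  apply NNPP; intro H2. apply H1. exists e; split; [exact He|]. exists N.
  intros n Hn. apply Rnot_lt_le. intro H3. apply H2. exists n; split; assumption.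
Qed.

Lemma escape f x : (forall z, ~ omega_limit f x z) ->
  forall q, exists N : nat, forall n, (N <= n)%nat -> 1 <= norm2 (sub2 q (iterf f n x)).
Proof.
  intros Hno q. apply NNPP; intro Hc.
  assert (Hinf : forall M, exists n, (M <= n)%nat /\ norm2 (sub2 q (iterf f n x)) < 1).
  { intro M. apply NNPP; intro H2. apply Hc. exists M. intros n Hn. apply Rnot_lt_le.
    intro H3. apply H2. eauto. }
  assert (Hs : forall z, {eN : R * nat | 0 < fst eN /\ forall n, (snd eN <= n)%nat ->
                 fst eN <= norm2 (sub2 (iterf f n x) z)}).
  { intro z. apply constructive_indefinite_description.
    destruct (nonomega_spec _ _ _ (Hno z)) as (e & He & N & HN). exists (e, N). simpl; auto. }
  pose (E z := fst (proj1_sig (Hs z))). pose (NN z := snd (proj1_sig (Hs z))).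
  assert (HE : forall z, 0 < E z /\ forall n, (NN z <= n)%nat -> E z <= norm2 (sub2 (iterf f n x) z))
    by (intro z; exact (proj2_sig (Hs z))).
  assert (Hd : forall u v, 0 < Rmin (E (u, v) / 2) (/ (INR (NN (u, v)) + 1))).
  { intros u v. apply Rmin_pos. destruct (HE (u, v)); lra.
    apply Rinv_0_lt_compat. pose proof (pos_INR (NN (u, v))); lra. }
  destruct (compactness_value_2d (fst q - 1) (fst q + 1) (snd q - 1) (snd q + 1)
     (fun u v => mkposreal _ (Hd u v))) as [d Hdd].
  destruct (archimed_cor1 d (cond_pos d)) as (M & HM & HM0).
  destruct (Hinf M) as (n & Hn & Hq).
  set (pn := iterf f n x) in *.
  pose proof (Rle_lt_trans _ _ _ (n2_fst (sub2 q pn)) Hq) as A1.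
  pose proof (Rle_lt_trans _ _ _ (n2_snd (sub2 q pn)) Hq) as A2.
  simpl in A1, A2. apply Rabs_def2 in A1. apply Rabs_def2 in A2.
  apply (Hdd (fst pn) (snd pn)); [lra|lra|].
  intros (u & v & _ & _ & H1 & H2 & H3). simpl in H1, H2, H3.
  destruct (HE (u, v)) as [HE0 HE1].
  assert (HMpos : 0 < INR M) by (apply lt_0_INR; lia).
  assert (D0 : 0 < pos d) by apply cond_pos.
  assert (Hinvd : / d < INR M).
  { rewrite <- (Rinv_inv (INR M)). apply Rinv_lt_contravar; [|exact HM].
    apply Rmult_lt_0_compat; [apply Rinv_0_lt_compat; exact HMpos| exact D0]. }
  assert (HN1 : INR (NN (u, v)) + 1 <= / d).
  { assert (d <= / (INR (NN (u, v)) + 1)) by (eapply Rle_trans; [exact H3| apply Rmin_r]).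
    rewrite <- (Rinv_inv (INR (NN (u, v)) + 1)). apply Rinv_le_contravar; assumption. }
  assert (HMn : INR M <= INR n) by (apply le_INR; exact Hn).
  assert (HNn : (NN (u, v) <= n)%nat).
  { apply INR_le. lra. }
  pose proof (HE1 n HNn) as K.
  pose proof (n2_le_sum (sub2 pn (u, v))) as K2. simpl in K2.
  pose proof (Rmin_l (E (u, v) / 2) (/ (INR (NN (u, v)) + 1))).
  fold pn in K. lra.
Qed.

Lemma cont2_iter g n : cont2 g -> cont2 (Nat.iter n g).
Proof.
  intro Hg. induction n as [|n IH].
  - intros p e He. exists e; split; [exact He|]. intros q Hq; exact Hq.
  - intros p e He. simpl. destruct (Hg (Nat.iter n g p) e He) as (d1 & Hd1 & H1).
    destruct (IH p d1 Hd1) as (d2 & Hd2 & H2). exists d2; split; [exact Hd2|].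
    intros q Hq. apply H1. apply H2. exact Hq.
Qed.

Lemma iter_inv (f g : R2 -> R2) : (forall p, g (f p) = p) ->
  forall n y, Nat.iter n g (iterf f n y) = y.
Proof.
  intro H. induction n as [|n IH]; intro y; [reflexivity|].
  unfold iterf in *. rewrite (Nat.iter_succ_r n _ f y). simpl. rewrite IH. apply H.
Qed.

Lemma orbit_nat f w o : is_orbit f w o -> forall k, o (Z.of_nat k) = iterf f k w.
Proof.
  intros [H0 H1] k. induction k as [|k IH]; [exact H0|].
  rewrite Nat2Z.inj_succ. unfold Z.succ. rewrite H1, IH. reflexivity.
Qed.

Lemma finmin (c : nat -> R) : (forall n, 0 < c n) -> forall N, exists m, 0 < m /\ m <= 1 /\
  forall n, (n < N)%nat -> m <= c n.
Proof.
  intros Hc N. induction N as [|N IH].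
  - exists 1. split; [lra|split; [lra|]]. intros n Hn; lia.
  - destruct IH as (m & H0 & H1 & H2). exists (Rmin m (c N)).
    split; [apply Rmin_pos; auto|]. split; [eapply Rle_trans; [apply Rmin_l|exact H1]|].
    intros n Hn. destruct (Nat.eq_dec n N) as [->|Hne]; [apply Rmin_r|].
    eapply Rle_trans; [apply Rmin_l|]. apply H2; lia.
Qed.

Theorem mainTheorem9 (f : R2 -> R2) (x : R2) :
  homeomorphism f ->
  (forall z, ~ omega_limit f x z) ->
  exists eps : R2 -> R, cont_pos eps /\
    (forall y, y <> x -> exists n : nat, (0 < n)%nat /\
        norm2 (sub2 (iterf f n x) (iterf f n y)) > eps (iterf f n x)) /\
    (forall (delta : R2 -> R) (xs : Z -> R2) (n0 : Z) (ox : Z -> R2) (w : R2),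
        cont_pos delta ->
        pseudo_orbit f delta xs ->
        is_orbit f x ox ->
        (forall n : Z, (n0 <= n)%Z -> xs n = ox n) ->
        shadowed f eps xs w ->
        w = x).
Proof.
  intros [Hfc [g [Hgc [Hgf Hfg]]]] Hno.
  pose (p n := iterf f n x).
  assert (Hc : forall n, {c | 0 < c /\ forall q, norm2 (sub2 q (p n)) <= c ->
              norm2 (sub2 (Nat.iter n g q) x) < / (INR n + 1)}).
  { intro n. apply constructive_indefinite_description.
    assert (He : 0 < / (INR n + 1)) by (apply Rinv_0_lt_compat; pose proof (pos_INR n); lra).
    destruct (cont2_iter g n Hgc (p n) _ He) as (d & Hd & H).
    exists (d / 2). split; [lra|]. intros q Hq.
    assert (Ex : Nat.iter n g (p n) = x) by exact (iter_inv f g Hgf n x).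
    rewrite <- Ex. apply H. fold (p n). lra. }
  pose (c n := proj1_sig (Hc n)).
  assert (Hcp : forall n, 0 < c n) by (intro n; exact (proj1 (proj2_sig (Hc n)))).
  assert (Hcb : forall n q, norm2 (sub2 q (p n)) <= c n ->
              norm2 (sub2 (Nat.iter n g q) x) < / (INR n + 1))
    by (intro n; exact (proj2 (proj2_sig (Hc n)))).
  pose (S q := fun r => exists n, r = - (c n + norm2 (sub2 q (p n)))).
  assert (bnd : forall q, bound (S q)).
  { intro q. exists 0. intros r [n ->]. pose proof (Hcp n); pose proof (n2_ge0 (sub2 q (p n))); lra. }
  assert (ne : forall q, exists r, S q r) by (intro q; exists (- (c 0%nat + norm2 (sub2 q (p 0%nat)))); exists 0%nat; reflexivity).
  pose (eps q := - proj1_sig (completeness (S q) (bnd q) (ne q))).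
  assert (E2 : forall q n, eps q <= c n + norm2 (sub2 q (p n))).
  { intros q n. unfold eps. destruct (completeness (S q) (bnd q) (ne q)) as [s [Hub Hl]]. simpl.
    assert (- (c n + norm2 (sub2 q (p n))) <= s) by (apply Hub; exists n; reflexivity). lra. }
  assert (E3 : forall q L, (forall n, L <= c n + norm2 (sub2 q (p n))) -> L <= eps q).
  { intros q L HL. unfold eps. destruct (completeness (S q) (bnd q) (ne q)) as [s [Hub Hl]]. simpl.
    assert (s <= - L). { apply Hl. intros r [n ->]. pose proof (HL n); lra. } lra. }
  assert (core : forall y k, (forall n, (k <= n)%nat -> norm2 (sub2 (iterf f n y) (p n)) <= eps (p n)) -> y = x).
  { intros y k Hk. apply n2_zero.
    destruct (Req_dec (norm2 (sub2 y x)) 0) as [Z|Z]; [exact Z|exfalso].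
    pose proof (n2_ge0 (sub2 y x)).
    destruct (archimed_cor1 (norm2 (sub2 y x))) as (N & HN & HN0); [lra|].
    assert (B : norm2 (sub2 (iterf f (N + k) y) (p (N + k)%nat)) <= c (N + k)%nat).
    { eapply Rle_trans; [apply Hk; lia|]. eapply Rle_trans; [apply E2|]. rewrite n2_self. lra. }
    apply Hcb in B. rewrite iter_inv in B by exact Hgf.
    assert (INR N <= INR (N + k) + 1) by (rewrite plus_INR; pose proof (pos_INR k); lra).
    assert (0 < INR N) by (apply lt_0_INR; lia).
    assert (/ (INR (N + k) + 1) <= / INR N) by (apply Rinv_le_contravar; lra).
    lra. }
  exists eps. split; [split|split].
  - intros q e He. exists e; split; [exact He|]. intros q' Hq'.
    assert (A1 : eps q' - norm2 (sub2 q' q) <= eps q).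
    { apply E3. intro n. pose proof (E2 q' n). pose proof (n2_tri q' q (p n)). lra. }
    assert (A2 : eps q - norm2 (sub2 q' q) <= eps q').
    { apply E3. intro n. pose proof (E2 q n). pose proof (n2_tri q q' (p n)).
      rewrite (n2_sym q q') in *. lra. }
    apply Rabs_def1; lra.
  - intro q. destruct (escape f x Hno q) as [N HN].
    destruct (finmin c Hcp N) as (m & Hm0 & Hm1 & Hm2).
    apply Rlt_le_trans with m; [exact Hm0|]. apply E3. intro n.
    pose proof (Hcp n). pose proof (n2_ge0 (sub2 q (p n))).
    destruct (le_lt_dec N n) as [Hle|Hlt].
    + pose proof (HN n Hle). unfold p. lra.
    + pose proof (Hm2 n Hlt). lra.
  - intros y Hy. apply NNPP; intro H. apply Hy. apply (core y 1%nat). intros n Hn.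
    rewrite n2_sym. apply Rnot_lt_le. intro H'. apply H. exists n. split; [lia|exact H'].
  - intros delta xs n0 ox w _ _ Hox Hxs [o [Ho Hsh]]. apply (core w (Z.to_nat n0)).
    intros n Hn. pose proof (Hsh (Z.of_nat n)) as K.
    rewrite Hxs in K by lia. rewrite (orbit_nat f x ox Hox), (orbit_nat f w o Ho) in K.
    rewrite n2_sym. apply Rlt_le. exact K.
Qed.
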